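(* Let $n$ be even and consider the bi-party bi-objective pseudo-Boolean problem BPAOAZ on $\{0,1\}^n$ (defined in the context), whose common Pareto set is $\{1^n\}$. The expected running time of the simple evolutionary multi-party multi-objective optimizer $\text{EMPMO}_{\text{simple}}$ (with $M=2$ parties) applied to BPAOAZ is bounded by $O(3n^2\log n)$.
   Context: BPAOAZ: for $\mathbf{x}=(x_1,\dots,x_n)\in\{0,1\}^n$ with $n$ even, party 1 has the two objectives $f_{11}(\mathbf{x})=\sum_{i=n/2+1}^{n}x_i$ and $f_{12}(\mathbf{x})=\sum_{i=1}^{n/2}x_i+\sum_{i=n/2+1}^{n}(1-x_i)$; party 2 has the two objectives $f_{21}(\mathbf{x})=\sum_{i=1}^{n/2}(1-x_i)+\sum_{i=n/2+1}^{n}x_i$ and $f_{22}(\mathbf{x})=\sum_{i=1}^{n/2}x_i$. All objectives are to be maximized. Write $F_m=(f_{m1},f_{m2})$. For party $m$, $\mathbf{z}$ weakly dominates $\mathbf{x}$ ($\mathbf{z}\succeq_m\mathbf{x}$) if $f_{mk}(\mathbf{z})\ge f_{mk}(\mathbf{x})$ for $k=1,2$, and dominates it ($\mathbf{z}\succ_m\mathbf{x}$) if additionally strict inequality holds for some $k$. The Pareto set of party $m$ is the set of $\mathbf{x}$ not dominated (w.r.t. $\succ_m$) by any point of $\{0,1\}^n$; the common Pareto set is the intersection of the two parties' Pareto sets. One-bit mutation flips one uniformly random bit. $\text{EMPMO}_{\text{simple}}$: choose $\mathbf{x}$ uniformly at random from $\{0,1\}^n$; set $\Phi=\{\mathbf{x}\}$,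 $P_1=P_2=\{\mathbf{x}\}$. In each iteration, for $m=1,2$ in turn: pick $\mathbf{x}\in P_m$ uniformly at random and apply one-bit mutation to get $\mathbf{x}'$; if there is no $\mathbf{z}\in P_m$ with $\mathbf{z}\succ_m\mathbf{x}'$ or $F_m(\mathbf{z})=F_m(\mathbf{x}')$, then set $P_m\leftarrow (P_m\setminus\{\mathbf{z}\in P_m:\mathbf{x}'\succ_m\mathbf{z}\})\cup\{\mathbf{x}'\}$, and moreover, if there is no $\mathbf{z}\in\Phi$ such that for all parties $m'$ ($\mathbf{z}\succ_{m'}\mathbf{x}'$ or $F_{m'}(\mathbf{z})=F_{m'}(\mathbf{x}')$), set $\Phi\leftarrow(\Phi\setminus\{\mathbf{z}\in\Phi:\exists m''\ \mathbf{x}'\succ_{m''}\mathbf{z}\})\cup\{\mathbf{x}'\}$. The running time is the number of fitness evaluations (i.e. mutations, counting both parties' mutations) until the common Pareto-optimal solutions are found for the first time. *)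

(* Defs.v *)
From HB Require Import structures.
From mathcomp Require Import all_boot all_order all_algebra.
From mathcomp Require Import all_classical all_reals all_analysis.
Set Implicit Arguments. Unset Strict Implicit. Unset Printing Implicit Defensive.
Import Order.TTheory GRing.Theory Num.Theory.

Definition bs (n : nat) := {ffun 'I_n -> bool}.

Section BPAOAZ.
Variable n : nat.

Definition half := n./2.

Definition f11 (x : bs n) : nat := \sum_(i < n | half <= i) x i.
Definition f12 (x : bs n) : nat :=
  \sum_(i < n | i < half) x i + \sum_(i < n | half <= i) ~~ x i.
Definition f21 (x : bs n) : nat :=
  \sum_(i < n | i < half) ~~ x i + \sum_(i < n | half <= i) x i.
Definition f22 (x : bs n) : nat := \sum_(i < n | i < half) x i.

Definition Fobj (m : 'I_2) (x : bs n) : nat * nat :=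
  if m == ord0 then (f11 x, f12 x) else (f21 x, f22 x).

Definition wdom (m : 'I_2) (z x : bs n) : bool :=
  ((Fobj m x).1 <= (Fobj m z).1) && ((Fobj m x).2 <= (Fobj m z).2).
Definition dom (m : 'I_2) (z x : bs n) : bool :=
  wdom m z x && (((Fobj m x).1 < (Fobj m z).1) || ((Fobj m x).2 < (Fobj m z).2)).

Definition paretoSet (m : 'I_2) : {set bs n} := [set x | [forall z, ~~ dom m z x]].
Definition commonPareto : {set bs n} := \bigcap_(m < 2) paretoSet m.

Definition state := ({set bs n} * {set bs n} * {set bs n})%type.
Definition Phi (s : state) := s.1.1.
Definition Pop (m : 'I_2) (s : state) := if m == ord0 then s.1.2 else s.2.
Definition setPop (m : 'I_2) (s : state) (P : {set bs n}) : state :=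
  if m == ord0 then (s.1.1, P, s.2) else (s.1.1, s.1.2, P).

Definition init_state (x : bs n) : state := ([set x], [set x], [set x]).

Definition flip (x : bs n) (i : 'I_n) : bs n :=
  [ffun j => if j == i then ~~ x j else x j].

Definition update (m : 'I_2) (s : state) (x' : bs n) : state :=
  if [exists z in Pop m s, dom m z x' || (Fobj m z == Fobj m x')] then s
  else
    let s1 := setPop m s ([set z in Pop m s | ~~ dom m x' z] :|: [set x']) in
    if [exists z in Phi s,
          [forall m' : 'I_2, dom m' z x' || (Fobj m' z == Fobj m' x')]]
    then s1
    else (([set z in Phi s | ~~ [exists m'' : 'I_2, dom m'' x' z]] :|: [set x']),
          s1.1.2, s1.2).

(* the run is finished once all common Pareto optimal solutions are found *)
Definition hit (s : state) : bool := commonPareto \subset Phi s.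

Definition party (t : nat) : 'I_2 := if odd t then ord_max else ord0.

Variable R : realType.
Local Open Scope ring_scope.

(* transition probability of one mutation step by party m :
   x uniform in P_m, bit i uniform in 'I_n *)
Definition step (m : 'I_2) (s s' : state) : R :=
  \sum_(x in Pop m s) \sum_(i < n)
     ((update m s (flip x i) == s')%:R / ((#|Pop m s| * n)%:R)).

(* q t s = Pr[ after t mutations the state is s and no hit occurred so far ] *)
Fixpoint q (t : nat) (s : state) : R :=
  match t with
  | 0 => if hit s then 0 else \sum_(x : bs n) (s == init_state x)%:R / (2 ^ n)%:R
  | t'.+1 => if hit s then 0 else \sum_(s0 : state) q t' s0 * step (party t') s0 s
  end.

(* Pr[ T > t ], T = number of fitness evaluations (mutations) until hit *)
Definition tailP (t : nat) : R := \sum_(s : state) q t s.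

(* expected running time E[T] = sum_{t >= 0} Pr[T > t]  (in \bar R) *)
Definition expected_runtime : \bar R := (\sum_(0 <= t <oo) (tailP t)%:E)%E.

End BPAOAZ.

(* Submission.v *)
Require Import Defs.
From HB Require Import structures.
From mathcomp Require Import all_boot all_order all_algebra.
From mathcomp Require Import all_classical all_reals all_analysis.
From mathcomp Require Import zify ring lra.
Import Order.TTheory GRing.Theory Num.Theory.
Set Implicit Arguments. Unset Strict Implicit. Unset Printing Implicit Defensive.

Section Comb.
Variable n : nat.
Notation hf := (Defs.half n).
Notation B := (bs n).

Definition A1 (x : B) : nat := \sum_(i < n | i < hf) x i.
Definition Z1 (x : B) : nat := \sum_(i < n | i < hf) ~~ x i.
Definition A2 (x : B) : nat := \sum_(i < n | hf <= i) x i.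
Definition Z2 (x : B) : nat := \sum_(i < n | hf <= i) ~~ x i.
Definition h1 : nat := \sum_(i < n | i < hf) 1.
Definition h2 : nat := \sum_(i < n | hf <= i) 1.

Lemma f11E x : f11 x = A2 x. Proof. by []. Qed.
Lemma f12E x : f12 x = A1 x + Z2 x. Proof. by []. Qed.
Lemma f21E x : f21 x = Z1 x + A2 x. Proof. by []. Qed.
Lemma f22E x : f22 x = A1 x. Proof. by []. Qed.

Lemma sumAZ (P : pred 'I_n) (x : B) :
  \sum_(i < n | P i) x i + \sum_(i < n | P i) ~~ x i = \sum_(i < n | P i) 1.
Proof. rewrite -big_split; apply: eq_bigr => i _; by case: (x i). Qed.

Lemma AZ1 x : A1 x + Z1 x = h1. Proof. exact: sumAZ. Qed.
Lemma AZ2 x : A2 x + Z2 x = h2. Proof. exact: sumAZ. Qed.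

Lemma h12 : h1 + h2 = n.
Proof.
rewrite /h1 /h2 [X in _ = X](_ : n = \sum_(i < n) 1); last first.
  by rewrite sum1_card card_ord.
rewrite [in RHS](bigID (fun i : 'I_n => i < hf)) /=; congr (_ + _).
by apply: eq_bigl => i; rewrite leqNgt.
Qed.

Lemma sum_flip (P : pred 'I_n) (x : B) j : x j = false ->
  \sum_(i < n | P i) flip x j i = \sum_(i < n | P i) x i + P j /\
  \sum_(i < n | P i) ~~ flip x j i + P j = \sum_(i < n | P i) ~~ x i.
Proof.
move=> xj.
have E : forall i, i != j -> flip x j i = x i.
  by move=> i /negbTE ij; rewrite /flip ffunE ij.
case Pj: (P j).
  have Pj' : P j by rewrite Pj.
  rewrite !(bigD1 j Pj') /=.
  rewrite /flip !ffunE eqxx xj /=.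
  have e1 : \sum_(i < n | P i && (i != j)) flip x j i = \sum_(i < n | P i && (i != j)) x i.
    by apply: eq_bigr => i /andP[_ ij]; rewrite E.
  have e2 : \sum_(i < n | P i && (i != j)) ~~ flip x j i = \sum_(i < n | P i && (i != j)) ~~ x i.
    by apply: eq_bigr => i /andP[_ ij]; rewrite E.
  rewrite /flip in e1 e2; rewrite e1 e2; split; by rewrite add0n addnC.
have e1 : \sum_(i < n | P i) flip x j i = \sum_(i < n | P i) x i.
  apply: eq_bigr => i Pi; rewrite E //; apply/eqP => ij; by rewrite ij Pj in Pi.
have e2 : \sum_(i < n | P i) ~~ flip x j i = \sum_(i < n | P i) ~~ x i.
  apply: eq_bigr => i Pi; rewrite E //; apply/eqP => ij; by rewrite ij Pj in Pi.
by rewrite e1 e2 !addn0.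
Qed.

Lemma flipA1 (x : B) (j : 'I_n) : x j = false -> A1 (flip x j) = A1 x + (j < hf).
Proof. by move=> xj; case: (sum_flip (fun i : 'I_n => i < hf) xj). Qed.
Lemma flipZ1 (x : B) (j : 'I_n) : x j = false -> Z1 (flip x j) + (j < hf) = Z1 x.
Proof. by move=> xj; case: (sum_flip (fun i : 'I_n => i < hf) xj). Qed.
Lemma flipA2 (x : B) (j : 'I_n) : x j = false -> A2 (flip x j) = A2 x + (hf <= j).
Proof. by move=> xj; case: (sum_flip (fun i : 'I_n => hf <= i) xj). Qed.
Lemma flipZ2 (x : B) (j : 'I_n) : x j = false -> Z2 (flip x j) + (hf <= j) = Z2 x.
Proof. by move=> xj; case: (sum_flip (fun i : 'I_n => hf <= i) xj). Qed.

Definition ones : B := [ffun => true].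

Lemma Z0_ones (x : B) : Z1 x = 0 -> Z2 x = 0 -> x = ones.
Proof.
move=> /eqP z1 /eqP z2; rewrite /Z1 /Z2 !sum_nat_eq0 in z1 z2.
apply/ffunP => i; rewrite ffunE.
case: (ltnP i hf) => hi.
  by move/forallP: z1 => /(_ i); rewrite hi /=; case: (x i).
by move/forallP: z2 => /(_ i); rewrite hi /=; case: (x i).
Qed.

Lemma Z1_ones : Z1 ones = 0.
Proof. by apply: big1 => i _; rewrite ffunE. Qed.
Lemma Z2_ones : Z2 ones = 0.
Proof. by apply: big1 => i _; rewrite ffunE. Qed.

Lemma not_ones (x : B) : x != ones -> exists j, x j = false.
Proof.
move=> xn; case: (boolP [exists j, ~~ x j]) => [/existsP[j /negbTE xj]|]; first by exists j.
rewrite negb_exists => /forallP H; case/eqP: xn; apply/ffunP => i.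
by rewrite ffunE; move: (H i); case: (x i).
Qed.

End Comb.

Section Dyn.
Variable n : nat.
Notation hf := (Defs.half n).
Notation B := (bs n).
Notation ones := (ones n).

Lemma Fobj0 (x : B) : Fobj ord0 x = (f11 x, f12 x). Proof. by rewrite /Fobj eqxx. Qed.
Lemma Fobj1 (x : B) : Fobj ord_max x = (f21 x, f22 x). Proof. by []. Qed.

Lemma I2_cases (m : 'I_2) : m = ord0 \/ m = ord_max.
Proof. by case: m => [[|[|]]] // ?; [left|right]; apply/val_inj. Qed.

Lemma dom0E (z x : B) : dom ord0 z x =
  [&& f11 x <= f11 z, f12 x <= f12 z & (f11 x < f11 z) || (f12 x < f12 z)].
Proof. by rewrite /dom /wdom Fobj0 /= andbA. Qed.
Lemma dom1E (z x : B) : dom ord_max z x =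
  [&& f21 x <= f21 z, f22 x <= f22 z & (f21 x < f21 z) || (f22 x < f22 z)].
Proof. by rewrite /dom /wdom Fobj1 /= andbA. Qed.

Lemma wdom_ones m (z : B) : wdom m z ones -> z = ones.
Proof.
have o1 := Z1_ones n; have o2 := Z2_ones n.
have a1 := AZ1 ones; have a2 := AZ2 ones; have b1 := AZ1 z; have b2 := AZ2 z.
case: (I2_cases m) => ->; rewrite /wdom ?Fobj0 ?Fobj1 /=.
  rewrite f11E f12E !f11E !f12E => /andP[c1 c2].
  apply: Z0_ones; lia.
rewrite f21E f22E !f21E !f22E => /andP[c1 c2].
apply: Z0_ones; lia.
Qed.

Lemma dom_wdom m (z x : B) : dom m z x -> wdom m z x.
Proof. by case/andP. Qed.
Lemma Feq_wdom m (z x : B) : Fobj m z == Fobj m x -> wdom m z x.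
Proof. by move/eqP=> e; rewrite /wdom e !leqnn. Qed.

Lemma dom_ones m (z : B) : dom m z ones = false.
Proof.
apply/negP => d; have := wdom_ones (dom_wdom d) => e; move: d; rewrite e.
by rewrite /dom !ltnn /= andbF.
Qed.

Lemma pareto_sub : commonPareto n \subset [set ones].
Proof.
apply/fintype.subsetP => x /bigcapP H; rewrite inE; apply/negPn/negP => /not_ones[j xj].
have H0 := H ord0 isT; have H1 := H ord_max isT.
rewrite inE in H0; rewrite inE in H1.
move/forallP: H0 => /(_ (flip x j)); move/forallP: H1 => /(_ (flip x j)).
have e1 := flipA1 xj; have e2 := flipZ1 xj; have e3 := flipA2 xj; have e4 := flipZ2 xj.
rewrite dom0E dom1E !f11E !f12E !f21E !f22E.
case: (ltnP j hf) => hj.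
  have hj' : (hf <= j) = false by rewrite leqNgt hj.
  rewrite hj' /= in e3 e4; rewrite hj /= in e1 e2.
  move=> _ /negP; apply; apply/and3P; split; lia.
have hj' : (j < hf) = false by rewrite ltnNge hj.
rewrite hj' /= in e1 e2; rewrite hj /= in e3 e4.
move=> /negP H1' _; apply: H1'; apply/and3P; split; lia.
Qed.

Lemma hit_ones (s : state n) : ones \in Phi s -> hit s.
Proof. by move=> h; rewrite /hit; apply: fintype.subset_trans pareto_sub _; rewrite finset.sub1set. Qed.

Definition acc m (s : state n) (x' : B) :=
  ~~ [exists z in Pop m s, dom m z x' || (Fobj m z == Fobj m x')].
Definition newP m (s : state n) (x' : B) :=
  [set z in Pop m s | ~~ dom m x' z] :|: [set x'].

Lemma Pop_upd m (s : state n) x' :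
  Pop m (update m s x') = if acc m s x' then newP m s x' else Pop m s.
Proof.
rewrite /update /acc /newP; case: ifP => _ //=.
by case: (I2_cases m) => ->; case: ifP.
Qed.

Lemma Pop0_upd1 (s : state n) x' : Pop ord0 (update ord_max s x') = Pop ord0 s.
Proof. by rewrite /update; case: ifP => _ //=; case: ifP. Qed.

Lemma Phi_ones m (s : state n) x' : ones \in Phi s -> ones \in Phi (update m s x').
Proof.
move=> h; rewrite /update; case: ifP => _ //=.
case: ifP => _.
  by case: (I2_cases m) => ->.
rewrite /Phi /= !inE; apply/orP; left; apply/andP; split; first exact: h.
by apply/existsP => -[m'' ]; rewrite dom_ones.
Qed.

Lemma Phi_new m (s : state n) x' : acc m s x' -> x' = ones ->
  ones \in Phi (update m s x').
Proof.
rewrite /acc /update => /negbTE -> ->.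
case: ifP => [/existsP[z /andP[zP /forallP /(_ ord0) h]]|_].
  have := h; rewrite dom_ones /= => /Feq_wdom /wdom_ones e; rewrite e in zP.
  by case: (I2_cases m) => ->.
by rewrite /Phi /= !inE eqxx orbT.
Qed.

Definition Inv (s : state n) :=
  [/\ Pop ord0 s != finset.set0, {in Pop ord0 s &, injective (@f11 n)} &
      (ones \in Pop ord0 s -> ones \in Phi s)].

Lemma Inv_init (x : B) : Inv (init_state x).
Proof.
split; rewrite /Pop /= ?eqxx.
- by apply/set0Pn; exists x; rewrite inE.
- by move=> a b; rewrite !inE => /eqP -> /eqP ->.
- by [].
Qed.

Lemma Inv_upd1 (s : state n) x' : Inv s -> Inv (update ord_max s x').
Proof.
case=> h1 h2 h3; split; rewrite Pop0_upd1 //.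
by move=> /h3; apply: Phi_ones.
Qed.

Lemma Inv_upd0 (s : state n) x' : Inv s -> Inv (update ord0 s x').
Proof.
case=> h1 h2 h3; rewrite /Inv Pop_upd.
case A: (acc ord0 s x'); last first.
  by rewrite /update; move: A; rewrite /acc => /negbFE ->.
split.
- by apply/set0Pn; exists x'; rewrite !inE eqxx orbT.
- move: A; rewrite /acc negb_exists => /forallP A.
  have key : forall z, z \in Pop ord0 s -> ~~ dom ord0 x' z -> f11 z = f11 x' -> False.
    move=> z zP nd e; move: (A z); rewrite zP /= dom0E Fobj0 Fobj0 xpair_eqE.
    move: nd; rewrite dom0E e leqnn ltnn /= eqxx /=.
    case: (ltngtP (f12 z) (f12 x')) => //= ->; by rewrite orbT.
  move=> a b; rewrite !inE => /orP[/andP[aP na]|/eqP ->] /orP[/andP[bP nb]|/eqP ->] //.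
  + exact: h2.
  + by move=> e; case: (key _ aP na e).
  + by move=> e; case: (key _ bP nb (esym e)).
- rewrite !inE => /orP[/andP[oP _]|/eqP oe].
    by apply: Phi_ones; apply: h3.
  by apply: Phi_new => //; rewrite A.
Qed.

End Dyn.

Section Pot.
Variable n : nat.
Notation hf := (Defs.half n).
Notation B := (bs n).
Notation h1 := (h1 n).
Notation h2 := (h2 n).

Definition amax (P : {set B}) := \max_(z in P) f11 z.
Definition bmax (P : {set B}) := \max_(z in P | f11 z == amax P) f12 z.

Lemma f11_le (z : B) : f11 z <= h2.
Proof. have := AZ2 z; rewrite f11E; lia. Qed.

Lemma amax_le (P : {set B}) : amax P <= h2.
Proof. by apply/bigmax_leqP => z _; apply: f11_le. Qed.

Lemma le_amax (P : {set B}) (z : B) : z \in P -> f11 z <= amax P.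
Proof. by move=> zP; apply: (leq_bigmax_cond _ zP). Qed.

Lemma le_bmax (P : {set B}) (z : B) : z \in P -> f11 z = amax P -> f12 z <= bmax P.
Proof. by move=> zP e; apply: leq_bigmax_cond; rewrite zP e eqxx. Qed.

Lemma bmax_wit (P : {set B}) : P != finset.set0 ->
  exists2 z, z \in P & f11 z = amax P /\ f12 z = bmax P.
Proof.
move=> /set0Pn[z0 z0P].
have [y yP ey] : {i0 | i0 \in P & amax P = f11 i0}.
  by apply: eq_bigmax_cond; apply/card_gt0P; exists z0.
have [w /andP[wP /eqP ew] ebw] :
  {i0 | i0 \in [pred z | (z \in P) && (f11 z == amax P)] & bmax P = f12 i0}.
  by apply: eq_bigmax_cond; apply/card_gt0P; exists y; rewrite inE yP ey eqxx.
by exists w.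
Qed.

Lemma pot_mono (P P' : {set B}) : P != finset.set0 ->
  (forall z, z \in P -> exists2 z', z' \in P' & f11 z <= f11 z' /\ f12 z <= f12 z') ->
  amax P <= amax P' /\ (amax P' = amax P -> bmax P <= bmax P').
Proof.
move=> Pn H; have [y yP [ea eb]] := bmax_wit Pn.
have [y' y'P [l1 l2]] := H y yP.
have la := le_amax y'P.
have la' := f11_le y'.
split; first lia.
move=> e; rewrite -eb; apply: (leq_trans l2); apply: le_bmax => //.
have := le_amax y'P; lia.
Qed.

Variable R : realType.
Local Open Scope ring_scope.

Definition H (k : nat) : R := \sum_(i < k) (i.+1%:R)^-1.
Definition cc : R := ((h2 + 1) * n)%:R.
Definition Upot (a b : nat) : R :=
  cc * (if (a < h2)%N then H (h2 - a) + H h1 else H (h1 - b)).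
Definition U (s : state n) : R := Upot (amax (Pop ord0 s)) (bmax (Pop ord0 s)).

Lemma H_ge0 k : 0 <= H k.
Proof. by apply: sumr_ge0 => i _; rewrite invr_ge0 ler0n. Qed.

Lemma H_S k : H k.+1 = H k + (k.+1%:R)^-1.
Proof. by rewrite /H big_ord_recr. Qed.

Lemma H_mono j k : (j <= k)%N -> H j <= H k.
Proof.
elim: k => [|k IH]; first by rewrite leqn0 => /eqP ->.
rewrite leq_eqVlt => /orP[/eqP -> //|]; rewrite ltnS => /IH h.
rewrite H_S; apply: (le_trans h); rewrite lerDl invr_ge0 ler0n //.
Qed.

Lemma cc_ge0 : 0 <= cc. Proof. by rewrite ler0n. Qed.

Lemma Upot_ge0 a b : 0 <= Upot a b.
Proof. by rewrite /Upot; apply: mulr_ge0; [exact: cc_ge0| case: ifP => _; rewrite ?addr_ge0 ?H_ge0]. Qed.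

Lemma Upot_le a b : Upot a b <= cc * (H h2 + H h1).
Proof.
rewrite /Upot; apply: ler_wpM2l; first exact: cc_ge0.
case: ifP => _.
  by rewrite lerD2r; apply: H_mono; rewrite leq_subr.
by rewrite -[X in X <= _]add0r; apply: lerD; [exact: H_ge0| apply: H_mono; rewrite leq_subr//].
Qed.

Lemma Upot_mono a b a' b' : (a <= a')%N -> (a' <= h2)%N -> (a' = a -> b <= b')%N ->
  Upot a' b' <= Upot a b.
Proof.
move=> l1 l2 l3; rewrite /Upot; apply: ler_wpM2l; first exact: cc_ge0.
case: (ltnP a' h2) => c'; case: (ltnP a h2) => c.
- by rewrite lerD2r; apply: H_mono; lia.
- lia.
- rewrite -[X in X <= _]add0r; apply: lerD; [exact: H_ge0| apply: H_mono; rewrite leq_subr//].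
- have e : a' = a by move: l3 => _; lia.
  by apply: H_mono; have := l3 e; lia.
Qed.

Lemma Upot_dec1 a b a' b' : (a < h2)%N -> (a < a')%N -> (a' <= h2)%N ->
  Upot a' b' <= Upot a b - cc / (h2 - a)%:R.
Proof.
move=> c l1 l2.
have [k ek] : exists k, (h2 - a = k.+1)%N by exists (h2 - a).-1; lia.
rewrite /Upot c ek H_S -mulrBr; apply: ler_wpM2l; first exact: cc_ge0.
have -> : H k + k.+1%:R^-1 + H h1 - k.+1%:R^-1 = H k + H h1 by rewrite addrAC addrK.
case: ifP => c'.
  by rewrite lerD2r; apply: H_mono; lia.
rewrite -[X in X <= _]add0r; apply: lerD; [exact: H_ge0| apply: H_mono; rewrite leq_subr//].
Qed.

Lemma Upot_dec2 a b a' b' : (h2 <= a)%N -> (h2 <= a')%N -> (b < b')%N -> (b < h1)%N ->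
  Upot a' b' <= Upot a b - cc / (h1 - b)%:R.
Proof.
move=> c c' l1 l2.
have [k ek] : exists k, (h1 - b = k.+1)%N by exists (h1 - b).-1; lia.
rewrite /Upot.
have -> : (a < h2)%N = false by rewrite ltnNge c.
have -> : (a' < h2)%N = false by rewrite ltnNge c'.
rewrite ek H_S -mulrBr addrK; apply: ler_wpM2l; first exact: cc_ge0.
by apply: H_mono; lia.
Qed.

End Pot.

Section Drift.
Variable n : nat.
Notation hf := (Defs.half n).
Notation B := (bs n).
Notation h1 := (h1 n).
Notation h2 := (h2 n).
Variable R : realType.
Local Open Scope ring_scope.
Notation U := (@U n R).
Notation cc := (@cc n R).

Lemma sum_pick (u : state n) (F : state n -> R) :
  \sum_(s' : state n) (u == s')%:R * F s' = F u.
Proof.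
rewrite (bigD1 u) //= eqxx mul1r big1 ?addr0 // => s' /negbTE.
by rewrite eq_sym => ->; rewrite mul0r.
Qed.

Lemma E_step m (s : state n) (G : state n -> R) :
  \sum_(s' : state n) step R m s s' * G s' =
  \sum_(x in Pop m s) \sum_(i < n) G (update m s (flip x i)) / (#|Pop m s| * n)%:R.
Proof.
rewrite /step.
under eq_bigr do rewrite mulr_suml.
rewrite exchange_big /=; apply: eq_bigr => x _.
under eq_bigr do rewrite mulr_suml.
rewrite exchange_big /=; apply: eq_bigr => i _.
under eq_bigr do rewrite mulrAC.
by rewrite -mulr_suml sum_pick.
Qed.

Lemma step_ge0 m (s s' : state n) : 0 <= step R m s s'.
Proof. by apply: sumr_ge0 => x _; apply: sumr_ge0 => i _; rewrite divr_ge0 ?ler0n. Qed.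

Lemma sum_const_le1 (P : {set B}) :
  \sum_(x in P) \sum_(i < n) (1 / (#|P| * n)%:R : R) <= 1.
Proof.
have e : forall c : R, \sum_(i < n) c = c *+ n by move=> c; rewrite sumr_const card_ord.
under eq_bigr do rewrite e.
rewrite sumr_const -mulrnA [(n * _)%N]mulnC -(mulr_natr (1 / _)) div1r.
have [d0|dn0] := eqVneq ((#|P| * n)%:R : R) 0.
  by rewrite d0 invr0 mul0r ler01.
by rewrite mulVf.
Qed.

Lemma upd0_wdom (s : state n) x' : forall z, z \in Pop ord0 s ->
  exists2 z', z' \in Pop ord0 (update ord0 s x') & (f11 z <= f11 z' /\ f12 z <= f12 z')%N.
Proof.
rewrite Pop_upd; case: ifP => A z zP; last by exists z.
case D: (dom ord0 x' z).
  exists x'; first by rewrite !inE eqxx orbT.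
  by move: D; rewrite dom0E => /and3P[-> -> _].
by exists z => //; rewrite !inE zP D.
Qed.

Lemma acc_crit (s : state n) x' :
  (forall z, z \in Pop ord0 s -> (f11 z < f11 x') || (f12 z < f12 x'))%N -> acc ord0 s x'.
Proof.
move=> H; rewrite /acc negb_exists; apply/forallP => z; apply/negP => /andP[zP].
move: (H z zP); rewrite dom0E !Fobj0 xpair_eqE.
move=> /orP[h|h] /orP[/and3P[h1' h2' _]|/andP[/eqP e1 /eqP e2]]; lia.
Qed.

Lemma acc_in (s : state n) x' : acc ord0 s x' -> x' \in Pop ord0 (update ord0 s x').
Proof. by rewrite Pop_upd => ->; rewrite !inE eqxx orbT. Qed.

Lemma U_mono0 (s : state n) x' : Inv s -> U (update ord0 s x') <= U s.
Proof.
case=> Pn _ _; have [l1 l2] := pot_mono Pn (@upd0_wdom s x').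
by rewrite /Submission.U; apply: Upot_mono => //; exact: amax_le.
Qed.

Lemma card_P (s : state n) : Inv s -> (#|Pop ord0 s| <= h2 + 1)%N.
Proof.
case=> _ inj _.
rewrite -(card_in_imset (f := fun z => (inord (f11 z) : 'I_h2.+1))).
  by apply: leq_trans (max_card _) _; rewrite card_ord addn1.
move=> a b aP bP /(congr1 val) /=; rewrite !inordK ?ltnS ?f11_le //.
exact: inj.
Qed.

End Drift.

Section Drift2.
Variable n : nat.
Notation hf := (Defs.half n).
Notation B := (bs n).
Notation h1 := (h1 n).
Notation h2 := (h2 n).
Variable R : realType.
Local Open Scope ring_scope.
Notation U := (@U n R).
Notation cc := (@cc n R).

Lemma drift1 (s : state n) : \sum_(s' : state n) step R ord_max s s' * U s' <= U s.
Proof.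
rewrite E_step.
have E : forall x', U (update ord_max s x') = U s by move=> x'; rewrite /Submission.U Pop0_upd1.
under eq_bigr do under eq_bigr do rewrite E -[X in X / _]mulr1 -mulrA.
under eq_bigr do rewrite -mulr_sumr.
rewrite -mulr_sumr -[X in _ <= X]mulr1; apply: ler_wpM2l.
  exact: Upot_ge0.
exact: sum_const_le1.
Qed.

End Drift2.

Section Drift3.
Variable n : nat.
Notation hf := (Defs.half n).
Notation B := (bs n).
Notation h1 := (h1 n).
Notation h2 := (h2 n).
Variable R : realType.
Local Open Scope ring_scope.
Notation U := (@U n R).
Notation cc := (@cc n R).

Lemma drift_key (s : state n) : Inv s -> ~~ hit s ->
  exists2 y, y \in Pop ord0 s &
  exists (G : pred 'I_n) (k : nat), [/\ (0 < k)%N, (\sum_(i < n) (G i : nat))%N = k &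
     forall i, G i -> U (update ord0 s (flip y i)) <= U s - cc / k%:R].
Proof.
move=> I nh; have I' := I; case: I' => Pn inj h3.
have [y yP [ea eb]] := bmax_wit Pn.
exists y => //.
have ay := AZ1 y; have by' := AZ2 y.
case: (ltnP (amax (Pop ord0 s)) h2) => ca.
- exists (fun i : 'I_n => (hf <= i)%N && ~~ y i), (h2 - amax (Pop ord0 s))%N; split.
  + lia.
  + have -> : (\sum_(i < n) (((hf <= i)%N && ~~ y i) : nat))%N = Z2 y.
      by rewrite /Z2 [in RHS]big_mkcond; apply: eq_bigr => i _; case: (hf <= i)%N.
    rewrite f11E in ea; lia.
  + move=> i /andP[hi yi]; have yi' : y i = false by apply/negbTE.
    have f11x : f11 (flip y i) = (amax (Pop ord0 s) + 1)%N.
      by rewrite f11E flipA2 // hi -ea f11E.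
    have A : acc ord0 s (flip y i).
      apply: acc_crit => z zP; rewrite f11x; have := le_amax zP; lia.
    have la := le_amax (acc_in A).
    rewrite /Submission.U; apply: Upot_dec1 => //; first lia.
    exact: amax_le.
- have ea' : amax (Pop ord0 s) = h2 by have := amax_le (Pop ord0 s); lia.
  rewrite ea' f11E in ea.
  have z2 : Z2 y = 0%N by lia.
  rewrite f12E z2 addn0 in eb.
  have bh : (bmax (Pop ord0 s) < h1)%N.
    rewrite ltnNge; apply/negP => bh.
    have yo : y = ones n by apply: Z0_ones => //; lia.
    by case/negP: nh; apply: hit_ones; apply: h3; rewrite -yo.
  exists (fun i : 'I_n => (i < hf)%N && ~~ y i), (h1 - bmax (Pop ord0 s))%N; split.
  + lia.
  + have -> : (\sum_(i < n) (((i < hf)%N && ~~ y i) : nat))%N = Z1 y.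
      by rewrite /Z1 [in RHS]big_mkcond; apply: eq_bigr => i _; case: (i < hf)%N.
    lia.
  + move=> i /andP[hi yi]; have yi' : y i = false by apply/negbTE.
    have hi' : (hf <= i)%N = false by rewrite leqNgt hi.
    have e1 := flipA1 yi'; have e3 := flipA2 yi'; have e4 := flipZ2 yi'.
    rewrite hi in e1; rewrite hi' in e3 e4.
    have f11x : f11 (flip y i) = h2 by rewrite f11E e3 addn0.
    have f12x : f12 (flip y i) = (bmax (Pop ord0 s) + 1)%N.
      by rewrite f12E e1 -eb; move: e4; rewrite addn0 z2 => ->; rewrite addn0.
    have A : acc ord0 s (flip y i).
      apply: acc_crit => z zP; rewrite f11x f12x.
      have l1 := le_amax zP.
      case: (ltnP (f11 z) h2) => c1 //=.
      have := le_bmax zP; rewrite ea' => /(_ ltac:(lia)) => l2.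
      lia.
    have la := le_amax (acc_in A).
    have la' := amax_le (Pop ord0 (update ord0 s (flip y i))).
    have lb := le_bmax (acc_in A).
    rewrite /Submission.U; apply: Upot_dec2 => //; try lia.
Qed.

End Drift3.

Section Drift4.
Variable n : nat.
Notation hf := (Defs.half n).
Notation B := (bs n).
Notation h1 := (h1 n).
Notation h2 := (h2 n).
Variable R : realType.
Local Open Scope ring_scope.
Notation U := (@U n R).
Notation cc := (@cc n R).

Lemma drift0 (s : state n) : Inv s -> ~~ hit s ->
  \sum_(s' : state n) step R ord0 s s' * U s' <= U s - 1.
Proof.
move=> I nh.
have [y yP [G [k [k0 Gk HG]]]] := drift_key R I nh.
have cP := card_P I.
have n0 : (0 < n)%N.
  case: (pickP G) => [i _|none]; first exact: (leq_ltn_trans (leq0n i) (ltn_ord i)).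
  by move: Gk; rewrite big1 => [|j _]; rewrite ?none //; lia.
have P0 : (0 < #|Pop ord0 s|)%N by apply/card_gt0P; exists y.
set P := Pop ord0 s.
set d : R := (#|P| * n)%:R.
have dpos : 0 < d by rewrite ltr0n muln_gt0 P0 n0.
have dcc : d <= cc by rewrite ler_nat leq_mul2r cP orbT.
rewrite E_step -/P -/d.
under eq_bigr do rewrite -mulr_suml.
rewrite -mulr_suml ler_pdivrMr //.
pose F x := \sum_(i < n) U (update ord0 s (flip x i)).
have Fb : forall x, x \in P -> F x <= n%:R * U s - (x == y)%:R * cc.
  move=> x xP; case: (eqVneq x y) => [->|nxy].
    apply: (@le_trans _ _ (\sum_(i < n) (U s - (G i)%:R * (cc / k%:R)))).
      apply: ler_sum => i _; case Gi: (G i).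
        by rewrite mul1r; apply: HG.
      by rewrite mul0r subr0; apply: U_mono0.
    rewrite sumrB sumr_const card_ord -mulr_suml -natr_sum Gk mulr_natl.
    have e1 : cc / k%:R *+ k = cc.
      by rewrite -mulr_natr -mulrA mulVf ?mulr1 // pnatr_eq0 -lt0n.
    by rewrite e1 /= mul1r mulr_natl.
  rewrite /= mul0r subr0.
  apply: (@le_trans _ _ (\sum_(i < n) U s)).
    by apply: ler_sum => i _; apply: U_mono0.
  by rewrite sumr_const card_ord mulr_natl.
apply: (le_trans (ler_sum _ Fb)).
rewrite sumrB sumr_const.
have -> : \sum_(x in P) (x == y)%:R * cc = cc.
  rewrite (bigD1 y) //= eqxx mul1r big1 ?addr0 // => x /andP[_ /negbTE ->].
  by rewrite mul0r.
have -> : (n%:R * U s) *+ #|P| = d * U s.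
  by rewrite /d -mulr_natl mulrA -natrM mulnC.
rewrite mulrBl mul1r mulrC lerD2l lerN2 //.
Qed.

End Drift4.

Section Prob.
Variable n : nat.
Notation B := (bs n).
Variable R : realType.
Local Open Scope ring_scope.
Notation U := (@U n R).
Notation cc := (@cc n R).

Lemma sum_neq0 (I : finType) (P : pred I) (F : I -> R) :
  \sum_(i | P i) F i != 0 -> exists i, P i /\ F i != 0.
Proof.
move=> H; case: (boolP [exists i, P i && (F i != 0)]) => [/existsP[i /andP[]]|].
  by move=> Pi Fi; exists i.
rewrite negb_exists => /forallP H'; case/eqP: H; apply: big1 => i Pi.
by move: (H' i); rewrite Pi /= negbK => /eqP.
Qed.

Lemma q_ge0 t (s : state n) : 0 <= q R t s.
Proof.
elim: t s => [|t IH] s /=; case: ifP => // _.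
  by apply: sumr_ge0 => x _; rewrite divr_ge0 ?ler0n.
by apply: sumr_ge0 => s0 _; rewrite mulr_ge0 ?step_ge0.
Qed.

Lemma q_hit t (s : state n) : hit s -> q R t s = 0.
Proof. by case: t => [|t] /= ->. Qed.

Lemma step_neq0 m (s s' : state n) : step R m s s' != 0 ->
  exists x i, s' = update m s (flip x i).
Proof.
rewrite /step => /sum_neq0[x [_ /sum_neq0[i [_ h]]]].
exists x, i; apply/eqP; apply: contraNT h => /negbTE ne.
by rewrite [update _ _ _ == _]eq_sym ne mul0r.
Qed.

Lemma q_inv t (s : state n) : q R t s != 0 -> Inv s.
Proof.
elim: t s => [|t IH] s /=; case: ifP => _; rewrite ?eqxx //.
  move=> /sum_neq0[x [_ h]]; have /eqP -> : s == init_state x.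
    by apply: contraNT h => /negbTE ->; rewrite mul0r.
  exact: Inv_init.
move=> /sum_neq0[s0 [_ h]].
have q0 : q R t s0 != 0 by apply: contraNneq h => ->; rewrite mul0r.
have st : step R (party t) s0 s != 0 by apply: contraNneq h => ->; rewrite mulr0.
have [x [i ->]] := step_neq0 st.
rewrite /party; case: (odd t).
  exact: Inv_upd1 (IH _ q0).
exact: Inv_upd0 (IH _ q0).
Qed.

Definition V (t : nat) (s : state n) : R := 2 * U s + (odd t)%:R.
Definition W (t : nat) : R := \sum_(s : state n) q R t s * V t s.

Lemma V_ge0 t s : 0 <= V t s.
Proof. by apply: addr_ge0; [apply: mulr_ge0 => //; exact: Upot_ge0 | exact: ler0n]. Qed.

Lemma W_ge0 t : 0 <= W t.
Proof. by apply: sumr_ge0 => s _; rewrite mulr_ge0 ?q_ge0 ?V_ge0. Qed.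

Lemma stepsum_le1 m (s : state n) : \sum_(s' : state n) step R m s s' <= 1.
Proof.
have := E_step m s (fun _ => (1 : R)); under eq_bigr do rewrite mulr1.
move=> ->; exact: sum_const_le1.
Qed.

Lemma Vsplit m (s : state n) t :
  \sum_(s' : state n) step R m s s' * V t s' =
  2 * (\sum_(s' : state n) step R m s s' * U s') +
  (odd t)%:R * \sum_(s' : state n) step R m s s'.
Proof.
rewrite !mulr_sumr -big_split /=; apply: eq_bigr => s' _.
by rewrite /V mulrDr mulrCA; congr (_ + _); rewrite mulrC.
Qed.

Lemma driftV t (s : state n) : q R t s != 0 ->
  1 + \sum_(s' : state n) step R (party t) s s' * V t.+1 s' <= V t s.
Proof.
move=> h; have I := q_inv h.
have nh : ~~ hit s by apply: contraNN h => hs; rewrite q_hit.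
rewrite Vsplit /V /party /=; case: (odd t) => /=.
  rewrite mul0r addr0 addrC lerD2r; apply: ler_wpM2l => //; exact: drift1.
rewrite mul1r addr0.
have h1 := drift0 R I nh; have h2 := stepsum_le1 ord0 s.
have h3 : 2 * (\sum_(s' : state n) step R ord0 s s' * U s') <= 2 * (U s - 1).
  by apply: ler_wpM2l.
lra.
Qed.

Lemma W_step t : tailP n R t + W t.+1 <= W t.
Proof.
have h1 : W t.+1 <= \sum_(s' : state n) (\sum_(s : state n) q R t s * step R (party t) s s') * V t.+1 s'.
  apply: ler_sum => s' _; apply: ler_wpM2r; first exact: V_ge0.
  rewrite /=; case: ifP => _ //.
  by apply: sumr_ge0 => s0 _; rewrite mulr_ge0 ?q_ge0 ?step_ge0.
have h2 : \sum_(s' : state n) (\sum_(s : state n) q R t s * step R (party t) s s') * V t.+1 s'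
   = \sum_(s : state n) q R t s * \sum_(s' : state n) step R (party t) s s' * V t.+1 s'.
  under eq_bigr do rewrite mulr_suml.
  rewrite exchange_big /=; apply: eq_bigr => s _.
  by rewrite mulr_sumr; apply: eq_bigr => s' _; rewrite mulrA.
have h3 : \sum_(s : state n) q R t s * \sum_(s' : state n) step R (party t) s s' * V t.+1 s'
   <= \sum_(s : state n) q R t s * (V t s - 1).
  apply: ler_sum => s _; have [->|hq] := eqVneq (q R t s) 0; first by rewrite !mul0r.
  apply: ler_wpM2l; first exact: q_ge0.
  have := driftV hq; lra.
have h4 : \sum_(s : state n) q R t s * (V t s - 1) = W t - tailP n R t.
  rewrite /W /tailP -sumrB; apply: eq_bigr => s _; by rewrite mulrBr mulr1.
lra.
Qed.

Lemma partial_le N : \sum_(0 <= t < N) tailP n R t <= W 0 - W N.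
Proof.
elim: N => [|N IH]; first by rewrite big_geq // subrr.
rewrite big_nat_recr //=; have := W_step N; lra.
Qed.

Lemma q0_sum : \sum_(s : state n) q R 0 s <= 1.
Proof.
apply: (@le_trans _ _ (\sum_(s : state n) \sum_(x : B) (init_state x == s)%:R * (2 ^ n)%:R^-1)).
  apply: ler_sum => s _ /=; case: ifP => _.
    by apply: sumr_ge0 => x _; rewrite mulr_ge0 ?invr_ge0 ?ler0n.
  by apply: ler_sum => x _; rewrite eq_sym.
rewrite exchange_big /=.
under eq_bigr do rewrite sum_pick.
rewrite sumr_const.
have -> : #|[pred x : B | true]| = (2 ^ n)%N.
  by rewrite cardT -cardE /bs card_ffun card_bool card_ord.
by rewrite -(mulr_natr ((2 ^ n)%:R^-1)) mulVf // pnatr_eq0 expn_eq0.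
Qed.

Lemma W0_le : W 0 <= 2 * (cc * (H R (h2 n) + H R (h1 n))).
Proof.
apply: (@le_trans _ _ (\sum_(s : state n) q R 0 s * (2 * (cc * (H R (h2 n) + H R (h1 n)))))).
  apply: ler_sum => s _; apply: ler_wpM2l; first exact: q_ge0.
  rewrite /V /= addr0; apply: ler_wpM2l => //; exact: Upot_le.
rewrite -mulr_suml -[X in _ <= X]mul1r; apply: ler_wpM2r; last exact: q0_sum.
by rewrite mulr_ge0 // mulr_ge0 ?cc_ge0 // addr_ge0 ?H_ge0.
Qed.

End Prob.

Section Final.
Variable R : realType.
Local Open Scope ring_scope.

Lemma ln_le_sub1 (z : R) : 0 < z -> 1 + ln z <= z.
Proof.
move=> z0; have := expR_ge1Dx (ln z); rewrite lnK //; rewrite posrE //.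
Qed.

Lemma ln_ge (y : R) : 0 < y -> 1 - y^-1 <= ln y.
Proof.
move=> y0; have yi : 0 < y^-1 by rewrite invr_gt0.
have := ln_le_sub1 yi; rewrite lnV ?posrE //; lra.
Qed.

Lemma H_ln m : H R m.+1 <= 1 + ln (m.+1%:R : R).
Proof.
elim: m => [|m IH].
  by rewrite H_S /H big_ord0 ln1 add0r addr0 invr1.
rewrite H_S.
have m1 : 0 < (m.+1%:R : R) by rewrite ltr0n.
have m2 : 0 < (m.+2%:R : R) by rewrite ltr0n.
set y := (m.+2%:R : R) / m.+1%:R.
have y0 : 0 < y by rewrite divr_gt0.
have e : (m.+2%:R : R) = m.+1%:R * y by rewrite /y mulrC mulfVK // gt_eqF.
have hy := ln_ge y0.
have ey : 1 - y^-1 = (m.+2%:R : R)^-1.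
  rewrite /y invf_div; apply: (@mulfI _ (m.+2%:R : R)); first by rewrite gt_eqF.
  rewrite mulrBr mulr1 mulfV ?gt_eqF // mulrC mulfVK ?gt_eqF //.
  by rewrite -natrB // subSn // subnn.
have lnE : ln (m.+2%:R : R) = ln (m.+1%:R : R) + ln y by rewrite e lnM ?posrE.
rewrite lnE; rewrite ey in hy; rewrite addrA; exact: lerD.
Qed.

Lemma H_le_ln k m : (k <= m.+1)%N -> H R k <= 1 + ln (m.+1%:R : R).
Proof. by move=> h; apply: le_trans (H_ln m); apply: H_mono. Qed.

Lemma ln4 : 1 <= ln (4%:R : R).
Proof.
have h2 : 0 < (2%:R : R) by rewrite ltr0n.
have := ln_ge h2.
have -> : (4%:R : R) = 2%:R * 2%:R by rewrite -natrM.
rewrite lnM ?posrE //.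
have : (2%:R : R)^-1 = 1 / 2 by rewrite div1r.
move=> ->; lra.
Qed.

End Final.

Local Open Scope ring_scope.

Theorem theorem1 (R : realType) :
  exists (c : R) (N0 : nat), 0 < c /\
    forall n : nat, ~~ odd n -> (N0 <= n)%N ->
      (expected_runtime n R <= (c * (3 * (n%:R ^+ 2) * ln (n%:R : R)))%:E)%E.
Proof.
exists 6, 4%N; split => // n _ n4.
set Bd := 2 * (cc n R * (H R (h2 n) + H R (h1 n))).
have tail0 : forall t, 0 <= tailP n R t.
  by move=> t; apply: sumr_ge0 => s _; exact: q_ge0.
have HB : (expected_runtime n R <= Bd%:E)%E.
  rewrite /expected_runtime; apply: lime_le.
    by apply: is_cvg_nneseries => k _ _; rewrite lee_fin.
  apply: nearW => N; rewrite sumEFin lee_fin.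
  apply: (le_trans (partial_le n R N)); have := W_ge0 n R N; have := W0_le n R.
  rewrite -/Bd; move=> a b; lra.
apply: (le_trans HB); rewrite lee_fin /Bd.
have [m em] : exists m, n = m.+1 by exists n.-1; lia.
have hh := h12 n.
have L1 : 1 <= ln (n%:R : R).
  apply: (le_trans (ln4 R)); rewrite ler_ln ?posrE ?ltr0n ?ler_nat //; lia.
have Hh2 : H R (h2 n) <= 1 + ln (n%:R : R) by have := @H_le_ln R (h2 n) m; rewrite -em; apply; lia.
have Hh1 : H R (h1 n) <= 1 + ln (n%:R : R) by have := @H_le_ln R (h1 n) m; rewrite -em; apply; lia.
have C : cc n R <= 2 * n%:R ^+ 2.
  rewrite /cc expr2 -natrM -[2]/(2%:R) -natrM ler_nat; lia.
have C0 := cc_ge0 n R.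
have Y0 : 0 <= H R (h2 n) + H R (h1 n) by rewrite addr_ge0 ?H_ge0.
set X := cc n R in C C0 *; set Y := H R (h2 n) + H R (h1 n) in Y0 *.
set L := ln (n%:R : R) in L1 Hh1 Hh2 *; set N2 := (n%:R : R) ^+ 2 in C *.
have YL : Y <= 4 * L by rewrite /Y; lra.
have XY : X * Y <= (2 * N2) * (4 * L) by apply: ler_pM.
clear HB tail0.
have NL : 0 <= N2 * L by apply: mulr_ge0; [exact: sqr_ge0 | lra].
nra.
Qed.
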